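(* Let $\mathcal{S}=(\mathscr{X},\nabla_{\mathcal{S}})$ be a non-commutative spacetime, $\mathscr{Y}$ a quantale, and $f:\mathscr{X}\to\mathscr{Y}$ a join-preserving strict monoidal order embedding with left adjoint $f_!:\mathscr{Y}\to\mathscr{X}$, and let $\nabla=f\circ\nabla_{\mathcal{S}}\circ f_!:\mathscr{Y}\to\mathscr{Y}$. If $\mathcal{S}$ satisfies $(wF)$ then so does $(\mathscr{Y},\nabla)$, and if $\mathcal{S}$ satisfies $(F)$ then so does $(\mathscr{Y},\nabla)$.
   Context: A quantale is a monoidal poset (monoid with multiplication monotone in each argument) having all joins, with multiplication distributing over arbitrary joins in each argument. A non-commutative spacetime is $(\mathscr{X},\nabla)$ with $\mathscr{X}$ a quantale and $\nabla$ join preserving and oplax monoidal ($\nabla e\le e$, $\nabla(a\otimes b)\le\nabla a\otimes\nabla b$). Strict monoidal: $f(e)=e$, $f(a\otimes b)=f(a)\otimes f(b)$; order embedding: $f(a)\le f(b)$ implies $a\le b$; $f_!$ left adjoint: $f_!(y)\le x$ iff $y\le f(x)$. A pair $(\mathscr{Z},\nabla)$ satisfies $(F)$ if $a\le\nabla a$ for all $a$, and $(wF)$ if $\nabla a=0$ (least element) implies $a=0$. *)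

(* Defs.v *)
Record Quantale := {
  qcar :> Type;
  qle : qcar -> qcar -> Prop;
  qle_refl : forall a, qle a a;
  qle_trans : forall a b c, qle a b -> qle b c -> qle a c;
  qle_antisym : forall a b, qle a b -> qle b a -> a = b;
  qmul : qcar -> qcar -> qcar;
  qunit : qcar;
  qmulA : forall a b c, qmul a (qmul b c) = qmul (qmul a b) c;
  qmul1l : forall a, qmul qunit a = a;
  qmul1r : forall a, qmul a qunit = a;
  qmul_monol : forall a a' b, qle a a' -> qle (qmul a b) (qmul a' b);
  qmul_monor : forall a b b', qle b b' -> qle (qmul a b) (qmul a b');
  qsup : (qcar -> Prop) -> qcar;
  qsup_ub : forall (S : qcar -> Prop) a, S a -> qle a (qsup S);
  qsup_least : forall (S : qcar -> Prop) b,
      (forall a, S a -> qle a b) -> qle (qsup S) b;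
  qmul_supl : forall (S : qcar -> Prop) b,
      qmul (qsup S) b = qsup (fun c => exists a, S a /\ c = qmul a b);
  qmul_supr : forall a (S : qcar -> Prop),
      qmul a (qsup S) = qsup (fun c => exists b, S b /\ c = qmul a b)
}.

Arguments qle {q}.
Arguments qmul {q}.
Arguments qunit {q}.
Arguments qsup {q}.

Definition qbot (X : Quantale) : X := qsup (fun _ : X => False).

Definition join_preserving {X Y : Quantale} (f : X -> Y) : Prop :=
  forall S : X -> Prop, f (qsup S) = qsup (fun y => exists x, S x /\ y = f x).

Definition oplax_monoidal {X : Quantale} (n : X -> X) : Prop :=
  qle (n qunit) qunit /\ forall a b, qle (n (qmul a b)) (qmul (n a) (n b)).

Definition noncomm_spacetime (X : Quantale) (n : X -> X) : Prop :=
  join_preserving n /\ oplax_monoidal n.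

Definition strict_monoidal {X Y : Quantale} (f : X -> Y) : Prop :=
  f qunit = qunit /\ forall a b, f (qmul a b) = qmul (f a) (f b).

Definition order_embedding {X Y : Quantale} (f : X -> Y) : Prop :=
  forall a b, qle (f a) (f b) -> qle a b.

Definition left_adjoint {X Y : Quantale} (g : Y -> X) (f : X -> Y) : Prop :=
  forall y x, qle (g y) x <-> qle y (f x).

Definition condF (Z : Quantale) (n : Z -> Z) : Prop := forall a, qle a (n a).

Definition condwF (Z : Quantale) (n : Z -> Z) : Prop :=
  forall a, n a = qbot Z -> a = qbot Z.

(* Main.v *)
Require Import Defs.

Lemma bot_le (Z : Quantale) (a : Z) : qle (qbot Z) a.
Proof. unfold qbot. apply qsup_least. intros _ []. Qed.

Theorem lemma8p9 (X Y : Quantale) (nablaS : X -> X) (f : X -> Y) (f_ : Y -> X)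
  (HS : noncomm_spacetime X nablaS)
  (Hjoin : join_preserving f) (Hmon : strict_monoidal f)
  (Hemb : order_embedding f) (Hadj : left_adjoint f_ f) :
  (condwF X nablaS -> condwF Y (fun y => f (nablaS (f_ y)))) /\
  (condF X nablaS -> condF Y (fun y => f (nablaS (f_ y)))).
Proof.
  assert (Hunit : forall a, qle a (f (f_ a))).
  { intro a. apply Hadj. apply qle_refl. }
  assert (Hfmono : forall x x', qle x x' -> qle (f x) (f x')).
  { intros x x' H. apply Hadj. eapply qle_trans; [|exact H].
    apply Hadj. apply qle_refl. }
  assert (Hfbot : f (qbot X) = qbot Y).
  { apply qle_antisym; [|apply bot_le].
    unfold qbot at 1. rewrite Hjoin. apply qsup_least.
    intros y [x [[] _]]. }
  split.
  - intros HwF a Ha. simpl in Ha.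
    rewrite <- Hfbot in Ha.
    assert (E : nablaS (f_ a) = qbot X).
    { apply qle_antisym; apply Hemb; rewrite Ha; apply qle_refl. }
    apply HwF in E.
    apply qle_antisym; [|apply bot_le].
    rewrite <- Hfbot, <- E. apply Hunit.
  - intros HF a. eapply qle_trans; [apply Hunit|]. apply Hfmono. apply HF.
Qed.
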